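(* Let $\mathbf x,\mathbf y\in(\Sigma^* )^\circ$ and let $\mathbf s=-g(\mathbf x)$, $\mathbf t=-g(\mathbf y)$. If $\|\mathbf x-\mathbf y\|_{\mathbf x}<\tfrac12$, then $\mathbf x$ certifies $\mathbf t$, i.e. $H(\mathbf x)^{-1}\mathbf t\in\Sigma^*$.
   Context: Fix nonzero real polynomials $g_1,\dots,g_m$ in $n$ variables and nonnegative integers $d_1,\dots,d_m$. Let $\mathcal V$ be the real vector space of polynomials $\sum_{i=1}^m g_i r_i$ with $\deg r_i\le 2d_i$, and $\Sigma\subseteq\mathcal V$ the cone of weighted sums of squares $\sum_i g_i\sigma_i$ with each $\sigma_i$ a sum of squares of polynomials of degree at most $d_i$; assume $\Sigma$ is a proper cone. Fix a basis $\mathbf q=(q_1,\dots,q_U)$ of $\mathcal V$, identify $\mathcal V$ and its dual with $\mathbb R^U$ with the standard inner product and Euclidean norm $\|\cdot\|$; $\Sigma^*$ is the dual cone, $K^\circ$ the interior of $K$. For each $i$ fix a basis $\mathbf p_i$ (of size $L_i$) of polynomials of degree at most $d_i$ and let $\Lambda_i:\mathbb R^U\to\mathbb S^{L_i}$ be the unique linear map with $\sum_u q_u\Lambda_i(\mathbf e_u)=g_i\mathbf p_i\mathbf p_i^T$; $\Lambda=\Lambda_1\oplus\cdots\oplus\Lambda_m$ (block diagonal), $\Lambda^*$ its adjoint. Then $(\Sigma^* )^\circ=\{\mathbf x:\Lambda(\mathbf x)\succ0\}$ and $\Sigma^*=\{\mathbf x:\Lambda(\mathbf x)\succeq0\}$.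 On $(\Sigma^* )^\circ$ let $f(\mathbf x)=-\ln\det\Lambda(\mathbf x)$, with gradient $g(\mathbf x)=-\Lambda^*(\Lambda(\mathbf x)^{-1})$ (not to be confused with the weights $g_i$) and Hessian $H(\mathbf x)\mathbf w=\Lambda^*(\Lambda(\mathbf x)^{-1}\Lambda(\mathbf w)\Lambda(\mathbf x)^{-1})$, positive definite. The local norm is $\|\mathbf v\|_{\mathbf x}=\|H(\mathbf x)^{1/2}\mathbf v\|$. *)

(* Defs.v *)
From mathcomp Require Import all_boot all_algebra.
From mathcomp Require Import all_classical all_reals all_analysis.
From mathcomp Require mpoly.
Import (canonicals, coercions) mpoly.

Set Implicit Arguments.
Unset Strict Implicit.
Unset Printing Implicit Defensive.
Import GRing.Theory Num.Theory.
Import numFieldNormedType.Exports.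
Local Open Scope ring_scope.
Local Open Scope classical_set_scope.

Notation mpol R n := (mpoly.mpoly n R).

Section WSOS.
Variables (R : realType) (n m : nat).
Local Notation mpol := (mpoly.mpoly n R).

(* deg p <= k  (msize p = 1 + total degree, 0 for the zero polynomial) *)
Definition deg_le (p : mpol) (k : nat) : Prop := (mpoly.msize p <= k.+1)%N.

Definition combo (U : nat) (q : 'I_U -> mpol) (c : 'cV[R]_U) : mpol :=
  \sum_(u < U) c u 0 *: q u.

Definition is_sos (k : nat) (sigma : mpol) : Prop :=
  exists (N : nat) (h : 'I_N -> mpol),
    (forall j, deg_le (h j) k) /\ sigma = \sum_(j < N) h j ^+ 2.

Variables (g : 'I_m -> mpol) (d : 'I_m -> nat).

Definition inV (f : mpol) : Prop :=
  exists r : 'I_m -> mpol,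
    (forall i, deg_le (r i) (2 * d i)%N) /\ f = \sum_(i < m) g i * r i.

Definition is_basis_V (U : nat) (q : 'I_U -> mpol) : Prop :=
  [/\ forall u, inV (q u),
      forall c, combo q c = 0 -> c = 0 &
      forall f, inV f -> exists c, f = combo q c].

Definition Sigma_coord (U : nat) (q : 'I_U -> mpol) : set 'cV[R]_U :=
  [set c | exists sigma : 'I_m -> mpol,
      (forall i, is_sos (d i) (sigma i)) /\
      \sum_(i < m) g i * sigma i = combo q c].

End WSOS.

Definition is_basis_deg (R : realType) (n : nat) (k : nat) (L : nat)
    (p : 'I_L -> mpol R n) : Prop :=
  [/\ forall j, deg_le (p j) k,
      forall c, combo p c = 0 -> c = 0 &
      forall f : mpol R n, deg_le f k -> exists c, f = combo p c].

Definition dual_cone (R : realType) (U : nat) (S : set 'cV[R]_U) : set 'cV[R]_U :=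
  [set x | forall c, S c -> 0 <= (c^T *m x) 0 0].

(* proper cone: closed, pointed, with nonempty interior (convexity of a
   cone of weighted SOS is automatic) *)
Definition proper_cone (R : realType) (U : nat) (S : set 'cV[R]_U) : Prop :=
  [/\ closed S, (forall c, S c -> S (- c) -> c = 0) & interior S !=set0].

Section Barrier.
Variables (R : realType) (m U : nat) (L : 'I_m -> nat).
(* A i u = Lambda_i(e_u) *)
Variable A : forall i : 'I_m, 'I_U -> 'M[R]_(L i).

Definition Lambda_i (i : 'I_m) (x : 'cV[R]_U) : 'M[R]_(L i) :=
  \sum_(u < U) x u 0 *: A i u.

Definition Lambda (x : 'cV[R]_U) : 'M[R]_(\sum_(i < m) L i) :=
  mxdiag (fun i => Lambda_i i x).

Definition Lambda_adj (M : 'M[R]_(\sum_(i < m) L i)) : 'cV[R]_U :=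
  \col_(u < U) \tr ((Lambda (delta_mx u 0))^T *m M).

Definition grad (x : 'cV[R]_U) : 'cV[R]_U :=
  - Lambda_adj (invmx (Lambda x)).

Definition Hess (x : 'cV[R]_U) : 'M[R]_U :=
  \matrix_(u < U, v < U)
     (Lambda_adj (invmx (Lambda x) *m Lambda (delta_mx v 0) *m invmx (Lambda x))) u 0.

Definition local_norm (x v : 'cV[R]_U) : R :=
  Num.sqrt ((v^T *m Hess x *m v) 0 0).

End Barrier.

(* Main.v *)
Require Import Defs.
From mathcomp Require Import all_boot all_algebra.
From mathcomp Require Import all_classical all_reals all_analysis.
From mathcomp Require mpoly.
Import (canonicals, coercions) mpoly.
Import GRing.Theory Num.Theory.
Import numFieldNormedType.Exports.
Local Open Scope ring_scope.
From mathcomp Require Import all_order.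
From mathcomp Require Import ring lra.
Import Order.TTheory.
Set Implicit Arguments.
Unset Strict Implicit.
Unset Printing Implicit Defensive.

Section Mx.
Variable R : rcfType.

Definition bf n (S : 'M[R]_n) (u w : 'cV[R]_n) : R := (u^T *m S *m w) 0 0.
Definition qf n (S : 'M[R]_n) (v : 'cV[R]_n) : R := bf S v v.
Definition pdm n (S : 'M[R]_n) := S^T = S /\ forall v, v != 0 -> 0 < qf S v.

Lemma trGG m n (G : 'M[R]_(m,n)) : \tr (G^T *m G) = \sum_j \sum_i G i j ^+ 2.
Proof.
rewrite /mxtrace; apply: eq_bigr => j _; rewrite mxE.
by apply: eq_bigr => i _; rewrite mxE expr2.
Qed.

Lemma trGG_ge0 m n (G : 'M[R]_(m,n)) : 0 <= \tr (G^T *m G).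
Proof. by rewrite trGG; apply: sumr_ge0 => j _; apply: sumr_ge0 => i _; apply: sqr_ge0. Qed.

Lemma trGG_eq0 m n (G : 'M[R]_(m,n)) : \tr (G^T *m G) = 0 -> G = 0.
Proof.
rewrite trGG => H; apply/matrixP => i j; rewrite mxE.
have H1 : forall j, 0 <= \sum_i G i j ^+ 2.
  by move=> k; apply: sumr_ge0 => l _; apply: sqr_ge0.
have := @psumr_eq0P _ _ _ _ (fun k _ => H1 k) H j isT.
move=> /psumr_eq0P H2; apply/eqP; rewrite -sqrf_eq0; apply/eqP.
by apply: H2 => // k _; apply: sqr_ge0.
Qed.


Lemma bfDl n (S : 'M[R]_n) u1 u2 w : bf S (u1 + u2) w = bf S u1 w + bf S u2 w.
Proof. by rewrite /bf linearD /= !mulmxDl mxE. Qed.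
Lemma bfDr n (S : 'M[R]_n) u w1 w2 : bf S u (w1 + w2) = bf S u w1 + bf S u w2.
Proof. by rewrite /bf !mulmxDr mxE. Qed.
Lemma bfZl n (S : 'M[R]_n) k u w : bf S (k *: u) w = k * bf S u w.
Proof. by rewrite /bf linearZ /= -!scalemxAl mxE. Qed.
Lemma bfZr n (S : 'M[R]_n) k u w : bf S u (k *: w) = k * bf S u w.
Proof. by rewrite /bf -!scalemxAr mxE. Qed.
Lemma bfNl n (S : 'M[R]_n) u w : bf S (- u) w = - bf S u w.
Proof. by rewrite -scaleN1r bfZl mulN1r. Qed.
Lemma bfNr n (S : 'M[R]_n) u w : bf S u (- w) = - bf S u w.
Proof. by rewrite -scaleN1r bfZr mulN1r. Qed.
Lemma bfSym n (S : 'M[R]_n) u w : S^T = S -> bf S u w = bf S w u.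
Proof.
move=> sS; rewrite /bf; have -> : (u^T *m S *m w) 0 0 = ((u^T *m S *m w)^T) 0 0.
  by rewrite [RHS]mxE.
by rewrite !trmx_mul trmxK sS mulmxA.
Qed.

Lemma mul11 m n (P : 'M[R]_(m,1)) (Q : 'M[R]_(1,n)) i j : (P *m Q) i j = P i 0 * Q 0 j.
Proof. by rewrite mxE big_ord1. Qed.

Lemma mxZE m n k (M : 'M[R]_(m,n)) i j : (k *: M) i j = k * M i j.
Proof. by rewrite mxE. Qed.

Lemma mxBE m n (A B : 'M[R]_(m,n)) i j : (A - B) i j = A i j - B i j.
Proof. by rewrite !mxE. Qed.
Lemma mxDE m n (A B : 'M[R]_(m,n)) i j : (A + B) i j = A i j + B i j.
Proof. by rewrite !mxE. Qed.

Lemma qf_block n (a : 'M[R]_1) (c : 'M[R]_(1,n)) (b : 'M[R]_(n,1)) (S' : 'M[R]_n)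
   (u : 'cV[R]_1) (w : 'cV[R]_n) :
  qf (block_mx a c b S') (col_mx u w) = (u^T *m a *m u) 0 0 + (u^T *m c *m w) 0 0
     + ((w^T *m b *m u) 0 0 + (w^T *m S' *m w) 0 0).
Proof.
rewrite /qf /bf tr_col_mx mul_row_block mul_row_col !mulmxDl !mxE.
by rewrite addrACA.
Qed.

Lemma chol n (S : 'M[R]_n) : pdm S -> exists B : 'M[R]_n, S = B^T *m B.
Proof.
elim: n S => [|n IH] S [sS pS].
  by exists 0; apply/matrixP => [[]].
have E : S = block_mx (@ulsubmx _ 1 n 1 n S) (@ursubmx _ 1 n 1 n S) (@dlsubmx _ 1 n 1 n S) (@drsubmx _ 1 n 1 n S).
  by rewrite submxK.
move: (@ulsubmx _ 1 n 1 n S) (@ursubmx _ 1 n 1 n S) (@dlsubmx _ 1 n 1 n S) (@drsubmx _ 1 n 1 n S) E => a c b S' E.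
subst S.
have pS2 : forall v : 'cV[R]_(1 + n), v != 0 -> 0 < qf (block_mx a c b S') v := pS.
have sS2 : (block_mx a c b S')^T = block_mx a c b S' := sS.
clear pS; rename pS2 into pS.
move: sS2; rewrite tr_block_mx => /eq_block_mx [ta tb tc tS'].
pose al : R := a 0 0.
have ea : a = al%:M by rewrite {1}[a]mx11_scalar.
have alpos : 0 < al.
  have nz : col_mx (1 : 'M[R]_1) (0 : 'cV[R]_n) != 0.
    by rewrite col_mx_eq0 negb_and oner_eq0.
  have := pS _ nz; rewrite qf_block trmx1 !mul1mx !mulmx0 trmx0 !mul0mx !mxE.
  by rewrite !addr0 big_ord1 !mxE eqxx mulr1n mulr1.
have al0 : al != 0 by rewrite lt0r_neq0.
pose S'' := S' - al^-1 *: (b *m c).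
have [C eC] : exists C : 'M[R]_n, S'' = C^T *m C.
  apply: IH; split.
    by rewrite /S'' linearB /= linearZ /= trmx_mul tb tc tS'.
  move=> w wn0.
  pose be := (c *m w) 0 0.
  pose k := - (al^-1 * be).
  have nz : col_mx (k%:M : 'M[R]_1) w != 0.
    by rewrite col_mx_eq0 negb_and wn0 orbT.
  have := pS _ nz; rewrite qf_block ea tr_scalar_mx.
  rewrite !mul_scalar_mx -!scalemxAl !mul_mx_scalar !mxZE.
  rewrite [(al%:M : 'M[R]_1) 0 0]mxE mulr1n.
  have -> : (w^T *m b) 0 0 = be.
    by rewrite -tc -trmx_mul mxE.
  rewrite /qf /bf /S'' mulmxBr mulmxBl mxBE -!scalemxAr -scalemxAl mxZE.
  rewrite !mulmxA -[w^T *m b *m c *m w]mulmxA mul11 -/be.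
  have -> : (w^T *m b) 0 0 = be.
    by rewrite -tc -trmx_mul mxE.
  rewrite -/be.
  have -> : k * (k * al) + k * be + (k * be + (w^T *m S' *m w) 0 0) =
            (w^T *m S' *m w) 0 0 - al^-1 * (be * be).
    by rewrite /k; field.
  by [].
have sal0 : Num.sqrt al != 0 by apply/negP; rewrite sqrtr_eq0 => h; have := le_lt_trans h alpos; rewrite ltxx.
pose B := block_mx (Num.sqrt al)%:M ((Num.sqrt al)^-1 *: c) 0 C.
suff key : B^T *m B = block_mx a c b S' by exists B; rewrite key.
rewrite /B tr_block_mx mulmx_block !trmx0 !mul0mx !mulmx0 !addr0 tr_scalar_mx.
rewrite -scalar_mxM -expr2 sqr_sqrtr ?ltW // -ea.
rewrite mul_scalar_mx scalerA mulfV // scale1r.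
rewrite linearZ /= -scalemxAl mul_mx_scalar scalerA mulVf // scale1r tc.
rewrite -scalemxAl -(scalemxAr _ b c) scalerA -expr2 exprVn sqr_sqrtr ?ltW //.
by rewrite -eC /S'' addrC subrK.
Qed.

Lemma qf0 n (S : 'M[R]_n) : qf S 0 = 0.
Proof. by rewrite /qf /bf mulmx0 mxE. Qed.

Lemma qf_ge0 n (S : 'M[R]_n) v : pdm S -> 0 <= qf S v.
Proof.
move=> [_ pS]; have [->|vn0] := eqVneq v 0; first by rewrite qf0.
exact/ltW/pS.
Qed.

Lemma pd_unit n (S : 'M[R]_n) : pdm S -> S \in unitmx.
Proof.
move=> [sS pS]; rewrite unitmxE unitfE; apply/negP => /det0P [v vn0 vS].
have vt : v^T != 0 by apply: contra vn0 => /eqP h; rewrite -[v]trmxK h trmx0.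
have := pS _ vt; rewrite /qf /bf trmxK vS mul0mx mxE.
by rewrite ltxx.
Qed.

Lemma qf_inv n (S : 'M[R]_n) v : pdm S ->
  qf (invmx S) v = qf S (invmx S *m v).
Proof.
move=> [sS pS]; have uS : S \in unitmx by apply: pd_unit.
rewrite /qf /bf trmx_mul trmx_inv sS -!mulmxA [S *m (invmx S *m v)]mulmxA.
by rewrite mulmxV // mul1mx.
Qed.

Lemma pd_inv n (S : 'M[R]_n) : pdm S -> pdm (invmx S).
Proof.
move=> hS; have uS : S \in unitmx by apply: pd_unit.
split; first by rewrite trmx_inv hS.1.
move=> v vn0; rewrite qf_inv //; apply: hS.2.
apply: contra vn0 => /eqP h.
by rewrite -[v]mul1mx -(mulmxV uS) -mulmxA h mulmx0.
Qed.

Lemma pdZ n k (S : 'M[R]_n) : 0 < k -> pdm S -> pdm (k *: S).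
Proof.
move=> k0 [sS pS]; split; first by rewrite linearZ /= sS.
move=> v vn0; rewrite /qf /bf -scalemxAr -scalemxAl mxZE.
by apply: mulr_gt0 => //; apply: pS.
Qed.

Lemma tr_pos n (S T D : 'M[R]_n) : pdm S -> pdm T -> D^T = D ->
  0 <= \tr (S *m D *m T *m D).
Proof.
move=> /chol [B ->] /chol [C ->] sD.
have -> : \tr (B^T *m B *m D *m (C^T *m C) *m D) =
          \tr ((C *m D *m B^T)^T *m (C *m D *m B^T)).
  rewrite [LHS](_ : _ = \tr (B^T *m (B *m D *m C^T *m C *m D))); last first.
    by rewrite !mulmxA.
  rewrite mxtrace_mulC !trmx_mul trmxK sD !mulmxA.
  by [].
exact: trGG_ge0.
Qed.

Lemma tr_pos_eq0 n (S D : 'M[R]_n) : pdm S -> D^T = D ->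
  \tr (S *m D *m S *m D) = 0 -> D = 0.
Proof.
move=> hS sD; have uS := pd_unit hS.
move: hS uS => /chol [B ->]; rewrite unitmx_mul => /andP [_ uB].
have -> : \tr (B^T *m B *m D *m (B^T *m B) *m D) =
          \tr ((B *m D *m B^T)^T *m (B *m D *m B^T)).
  rewrite [LHS](_ : _ = \tr (B^T *m (B *m D *m B^T *m B *m D))); last first.
    by rewrite !mulmxA.
  rewrite mxtrace_mulC !trmx_mul trmxK sD !mulmxA.
  by [].
move=> /trGG_eq0 h.
have uBt : B^T \in unitmx by rewrite unitmx_tr.
by rewrite -[D](mulKmx uB) -[B *m D](mulmxK uBt) h mul0mx mulmx0.
Qed.

Lemma cs_scalar (a b c : R) : 0 <= a ->
  (forall t, 0 <= c + 2 * b * t + a * t ^+ 2) -> b ^+ 2 <= a * c.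
Proof.
move=> a0 H; have [a00|ap] := eqVneq a 0.
  subst a; have [b0|bn0] := eqVneq b 0; first by subst b; rewrite expr0n mul0r.
  have := H (- (c + 1) / (2 * b)).
  have -> : c + 2 * b * (- (c + 1) / (2 * b)) + 0 * (- (c + 1) / (2 * b)) ^+ 2 = -1.
    by field.
  by rewrite ler0N1.
have apos : 0 < a by rewrite lt0r ap.
have := mulr_ge0 a0 (H (- b / a)).
have -> : a * (c + 2 * b * (- b / a) + a * (- b / a) ^+ 2) = a * c - b ^+ 2.
  by field.
by rewrite subr_ge0.
Qed.

Lemma qfD n (A B : 'M[R]_n) v : qf (A + B) v = qf A v + qf B v.
Proof. by rewrite /qf /bf mulmxDr mulmxDl mxDE. Qed.
Lemma qfB n (A B : 'M[R]_n) v : qf (A - B) v = qf A v - qf B v.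
Proof. by rewrite /qf /bf mulmxBr mulmxBl mxBE. Qed.
Lemma qfZ n (A : 'M[R]_n) k v : qf (k *: A) v = k * qf A v.
Proof. by rewrite /qf /bf -scalemxAr -scalemxAl mxZE. Qed.
Lemma tr11 (A : 'M[R]_1) : \tr A = A 0 0.
Proof. by rewrite /mxtrace big_ord1. Qed.

End Mx.

Section Core.
Variables (R : rcfType) (N U : nat) (Lam : 'cV[R]_U -> 'M[R]_N).
Hypothesis LamD : forall v w, Lam (v + w) = Lam v + Lam w.
Hypothesis LamZ : forall k v, Lam (k *: v) = k *: Lam v.

Definition ee u : 'cV[R]_U := delta_mx u 0.
Definition Hs x := \matrix_(u, v)
  \tr (Lam (ee u) *m invmx (Lam x) *m Lam (ee v) *m invmx (Lam x)).
Definition tv y := \col_u \tr (Lam (ee u) *m invmx (Lam y)).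

Definition be (K E F : 'M[R]_N) := \tr (E *m K *m F *m K).

Lemma beDl K E1 E2 F : be K (E1 + E2) F = be K E1 F + be K E2 F.
Proof. by rewrite /be !mulmxDl mxtraceD. Qed.
Lemma beDr K E F1 F2 : be K E (F1 + F2) = be K E F1 + be K E F2.
Proof. by rewrite /be mulmxDr mulmxDl mxtraceD. Qed.
Lemma beZl K k E F : be K (k *: E) F = k * be K E F.
Proof. by rewrite /be -!scalemxAl mxtraceZ. Qed.
Lemma beZr K k E F : be K E (k *: F) = k * be K E F.
Proof. by rewrite /be -scalemxAr -scalemxAl mxtraceZ. Qed.
Lemma be0l K F : be K 0 F = 0.
Proof. by rewrite /be !mul0mx linear0. Qed.
Lemma be0r K E : be K E 0 = 0.
Proof. by rewrite /be mulmx0 mul0mx linear0. Qed.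
Lemma beNl K E F : be K (- E) F = - be K E F.
Proof. by rewrite -scaleN1r beZl mulN1r. Qed.
Lemma beNr K E F : be K E (- F) = - be K E F.
Proof. by rewrite -scaleN1r beZr mulN1r. Qed.
Lemma beBl K E1 E2 F : be K (E1 - E2) F = be K E1 F - be K E2 F.
Proof. by rewrite beDl beNl. Qed.
Lemma beBr K E F1 F2 : be K E (F1 - F2) = be K E F1 - be K E F2.
Proof. by rewrite beDr beNr. Qed.
Lemma be_sym K E F : be K E F = be K F E.
Proof. by rewrite /be -(mulmxA (E *m K)) mxtrace_mulC !mulmxA. Qed.
Lemma be_suml K (I : finType) (F : I -> 'M[R]_N) G :
  be K (\sum_i F i) G = \sum_i be K (F i) G.
Proof. exact: (big_morph (fun E => be K E G) (fun a b => beDl K a b G) (be0l K G)). Qed.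
Lemma be_sumr K (I : finType) (F : I -> 'M[R]_N) G :
  be K G (\sum_i F i) = \sum_i be K G (F i).
Proof. exact: (big_morph (fun E => be K G E) (fun a b => beDr K G a b) (be0r K G)). Qed.

Lemma Lam0 : Lam 0 = 0.
Proof. by rewrite -(scale0r 0) LamZ scale0r. Qed.

Lemma vec_sum (v : 'cV[R]_U) : v = \sum_u v u 0 *: ee u.
Proof.
apply/matrixP => i j; rewrite summxE (bigD1 i) //= big1 ?addr0.
  by rewrite mxZE /ee mxE eqxx (ord1 j) eqxx mulr1.
by move=> k ki; rewrite mxZE /ee mxE eq_sym (negbTE ki) mulr0.
Qed.

Lemma Lam_sum v : Lam v = \sum_u v u 0 *: Lam (ee u).
Proof.
rewrite {1}[v]vec_sum (big_morph Lam LamD Lam0).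
by apply: eq_bigr => u _; rewrite LamZ.
Qed.

Lemma bfH x a b : bf (Hs x) a b = be (invmx (Lam x)) (Lam a) (Lam b).
Proof.
rewrite (Lam_sum a) (Lam_sum b) be_suml.
rewrite /bf mxE; under eq_bigr do rewrite mxE.
under [RHS]eq_bigr do rewrite beZl be_sumr.
under [RHS]eq_bigr do under eq_bigr do rewrite beZr.
under eq_bigr do rewrite mulr_suml.
rewrite exchange_big /=; apply: eq_bigr => i _.
rewrite mulr_sumr; apply: eq_bigr => j _.
by rewrite !mxE /be; ring.
Qed.

Lemma bt y a : (a^T *m tv y) 0 0 = \tr (Lam a *m invmx (Lam y)).
Proof.
rewrite (Lam_sum a) mulmx_suml linear_sum /= mxE.
apply: eq_bigr => i _; rewrite !mxE -scalemxAl mxtraceZ.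
by [].
Qed.

Lemma LamN v : Lam (- v) = - Lam v.
Proof. by rewrite -scaleN1r LamZ scaleN1r. Qed.
Lemma LamB v w : Lam (v - w) = Lam v - Lam w.
Proof. by rewrite LamD LamN. Qed.

Hypothesis LamT : forall v, (Lam v)^T = Lam v.
Hypothesis Laminj : forall v, Lam v = 0 -> v = 0.


Lemma be_ge0 K E : pdm K -> E^T = E -> 0 <= be K E E.
Proof.
move=> hK sE; rewrite /be (_ : \tr (E *m K *m E *m K) = \tr (K *m E *m K *m E)).
  exact: tr_pos.
by rewrite mxtrace_mulC !mulmxA.
Qed.

Lemma be_eq0 K E : pdm K -> E^T = E -> be K E E = 0 -> E = 0.
Proof.
move=> hK sE; rewrite /be (_ : \tr (E *m K *m E *m K) = \tr (K *m E *m K *m E)).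
  exact: tr_pos_eq0.
by rewrite mxtrace_mulC !mulmxA.
Qed.

Lemma be_cs K E F : pdm K -> E^T = E -> F^T = F ->
  be K E F ^+ 2 <= be K F F * be K E E.
Proof.
move=> hK sE sF; apply: cs_scalar; first exact: be_ge0.
move=> t; have h1 : (E + t *: F)^T = E + t *: F.
  by rewrite linearD /= linearZ /= sE sF.
have := be_ge0 hK h1.
rewrite beDl !beDr !beZl !beZr (be_sym K F E) => h.
by rewrite -[X in _ <= X]addr0; lra.
Qed.

Lemma core_mx (X Y Z : 'M[R]_N) : pdm X -> pdm Y -> Z^T = Z ->
  be (invmx X) (Z - X) Z = \tr ((Z - X) *m invmx Y) ->
  be (invmx X) (X - Y) (X - Y) < 1 / 4 -> forall v, 0 <= qf Z v.
Proof.
move=> hX hY sZ eZ hd.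
have uX := pd_unit hX; have uY := pd_unit hY.
have hK := pd_inv hX; have hJ := pd_inv hY.
have [sX _] := hX; have [sY _] := hY; have [sK _] := hK; have [sJ _] := hJ.
move: hK hJ sK sJ eZ hd.
set K := invmx X; set J := invmx Y => hK hJ sK sJ eZ hd.
have KX : forall m (A : 'M[R]_(m,N)), A *m K *m X = A.
  by move=> m A; rewrite -mulmxA mulVmx // mulmx1.
have XK : forall m (A : 'M[R]_(m,N)), A *m X *m K = A.
  by move=> m A; rewrite -mulmxA mulmxV // mulmx1.
have JY : forall m (A : 'M[R]_(m,N)), A *m J *m Y = A.
  by move=> m A; rewrite -mulmxA mulVmx // mulmx1.
have [M eM] : exists M, M = X *m J *m X by eexists.
have sM : M^T = M by rewrite eM !trmx_mul sX sJ mulmxA.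
have hM : forall E, be K E M = \tr (E *m J).
  by move=> E; rewrite /be eM !mulmxA KX XK.
have [E eE] : exists E, E = Z - X by eexists.
have sE : E^T = E by rewrite eE linearB /= sZ sX.
have orth : be K E (M - Z) = 0.
  by rewrite beBr hM eE eZ subrr.
have sMZ : (M - Z)^T = M - Z by rewrite linearB /= sM sZ.
have pyth : be K E E <= be K (M - X) (M - X).
  have -> : M - X = E + (M - Z) by rewrite eE [RHS]addrC addrA subrK.
  rewrite (beDl K E (M - Z)) (beDr K E E (M - Z)) (beDr K (M - Z) E (M - Z)) (be_sym K (M - Z) E) orth.
  have := be_ge0 hK sMZ; lra.
have [D eD] : exists D, D = X - Y by eexists.
have sD : D^T = D by rewrite eD linearB /= sX sY.
have eMX : M - X = X *m J *m D.
  by rewrite eD mulmxBr JY eM.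
have trJ : be K (M - X) (M - X) = \tr (J *m D *m J *m D).
  rewrite eMX /be !mulmxA KX -!mulmxA mxtrace_mulC !mulmxA KX.
  by [].
move: hd; rewrite -eD => hd.
have hDF : forall G (v : 'cV[R]_N), be K G (X *m v *m v^T *m X) = qf G v.
  move=> G v; rewrite /be !mulmxA KX XK mxtrace_mulC tr11.
  by rewrite /qf /bf mulmxA.
have hFF : forall v : 'cV[R]_N, be K (X *m v *m v^T *m X) (X *m v *m v^T *m X) = qf X v ^+ 2.
  move=> v; rewrite /be !mulmxA KX XK.
  rewrite -(mulmxA (X *m v) v^T X) -(mulmxA (X *m v) (v^T *m X) v).
  rewrite [v^T *m X *m v]mx11_scalar mul_mx_scalar -scalemxAl mxtraceZ.
  by rewrite mxtrace_mulC tr11 mulmxA expr2.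
have sF : forall v : 'cV[R]_N, (X *m v *m v^T *m X)^T = X *m v *m v^T *m X.
  by move=> v; rewrite !trmx_mul trmxK sX !mulmxA.
have Ygt : forall v : 'cV[R]_N, v != 0 -> qf X v / 2 < qf Y v.
  move=> v vn0.
  have eY : Y = X - D by rewrite eD opprB addrC subrK.
  have qXp : 0 < qf X v by apply: hX.2.
  have := be_cs hK sD (sF v); rewrite hDF hFF.
  have := be_ge0 hK sD.
  rewrite eY qfB.
  move: (qf X v) (qf D v) (be K D D) qXp hd => q p d qp hd1 d0 h.
  have q2 : 0 < q ^+ 2 by rewrite exprn_gt0.
  have h3 : q ^+ 2 * d < q ^+ 2 * (1 / 4) by rewrite ltr_pM2l.
  have h4 : p ^+ 2 < q ^+ 2 / 4 by lra.
  nra.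
have [P eP] : exists P, P = 2 *: K by eexists.
have hP : pdm P by rewrite eP; apply: pdZ.
have hPJ : pdm (P - J).
  split; first by rewrite linearB /= hP.1 sJ.
  move=> v vn0.
  have [w ew] : exists w, w = J *m v by eexists.
  have evw : Y *m w = v by rewrite ew mulKVmx.
  have wn0 : w != 0.
    by apply: contra vn0 => /eqP h; rewrite -evw h mulmx0.
  rewrite qfB eP qfZ.
  have -> : qf J v = qf Y w by rewrite ew qf_inv.
  have h0 := @qf_ge0 _ _ X (w - 2 *: (K *m v)) hX.
  move: h0; rewrite /qf bfDl !bfDr !bfNl !bfNr !bfZl !bfZr.
  rewrite (bfSym _ _ sX) -/(qf X (K *m v)) -qf_inv // -/K.
  have -> : bf X (K *m v) w = qf Y w.
    by rewrite (bfSym _ _ sX) /bf mulmxA XK -evw /qf /bf mulmxA.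
  have := Ygt w wn0.
  rewrite /qf.
  lra.
have trJD : \tr (J *m D *m J *m D) <= \tr (P *m D *m P *m D).
  have e : \tr (P *m D *m P *m D) - \tr (J *m D *m J *m D) =
     \tr ((P - J) *m D *m P *m D) + \tr (J *m D *m (P - J) *m D).
    rewrite !(mulmxBl, mulmxBr) !linearB /=; lra.
  have := tr_pos hPJ hP sD; have := tr_pos hJ hPJ sD; lra.
have trPD : \tr (P *m D *m P *m D) = 4 * be K D D.
  rewrite eP -!scalemxAl -!scalemxAr -!scalemxAl !mxtraceZ /be.
  rewrite [\tr (D *m K *m D *m K)]mxtrace_mulC !mulmxA mulrA.
  by congr (_ * _); rewrite -natrM.
have EE1 : be K E E < 1 by lra.
move=> v.
have eZ2 : Z = X + E by rewrite eE addrC subrK.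
rewrite eZ2 qfD.
have := be_cs hK sE (sF v); rewrite hDF hFF.
have := @qf_ge0 _ _ X v hX; have := be_ge0 hK sE.
move: (qf X v) (qf E v) (be K E E) EE1 => q p e e1 e0 q0 h.
have h2 : q ^+ 2 * e <= q ^+ 2 * 1 by rewrite ler_wpM2l ?sqr_ge0 // ltW.
nra.
Qed.

Theorem core x y : pdm (Lam x) -> pdm (Lam y) -> qf (Hs x) (x - y) < 1 / 4 ->
  forall v, 0 <= qf (Lam (invmx (Hs x) *m tv y)) v.
Proof.
move=> hX hY hd.
have hK := pd_inv hX.
have Hsym : (Hs x)^T = Hs x.
  apply/matrixP => u w; rewrite !mxE.
  exact: (be_sym (invmx (Lam x)) (Lam (ee w)) (Lam (ee u))).
have hH : pdm (Hs x).
  split => // w wn0; rewrite /qf bfH.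
  have := be_ge0 hK (LamT w); rewrite le_eqVlt => /orP [/eqP h|//].
  have := be_eq0 hK (LamT w) (esym h) => /Laminj /eqP.
  by rewrite (negbTE wn0).
have uH := pd_unit hH.
pose z := invmx (Hs x) *m tv y.
have ez : bf (Hs x) (z - x) z = ((z - x)^T *m tv y) 0 0.
  by rewrite /bf /z -mulmxA mulKVmx.
rewrite bfH bt LamB in ez.
apply: (core_mx hX hY (LamT z) ez).
by move: hd; rewrite /qf bfH LamB.
Qed.

End Core.

Section Conn.
Variables (R : realType) (m U : nat) (L : 'I_m -> nat).
Variable (A : forall i : 'I_m, 'I_U -> 'M[R]_(L i)).
Hypothesis symA : forall i u, (A i u)^T = A i u.

Lemma mxdiag_scale (k : R) (B : forall i, 'M[R]_(L i)) :
  \mxdiag_i (k *: B i) = k *: \mxdiag_i B i.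
Proof.
rewrite -mul_scalar_mx -(@mxdiagZ _ _ L k).
have -> : \mxdiag_i B i = \mxblock_(i, j) (if i == j then conform_mx 0 (B i) else 0) by [].
rewrite mul_mxdiag_mxblock /mxdiag.
apply: eq_mxblock => i j; case: eqVneq => [<-|_].
  by rewrite !conform_mx_id mul_scalar_mx.
by rewrite mulmx0.
Qed.

Lemma Lambda_iD i v w : Lambda_i A i (v + w) = Lambda_i A i v + Lambda_i A i w.
Proof. by rewrite /Lambda_i -big_split; apply: eq_bigr => u _; rewrite mxE scalerDl. Qed.
Lemma Lambda_iZ i k v : Lambda_i A i (k *: v) = k *: Lambda_i A i v.
Proof. by rewrite /Lambda_i scaler_sumr; apply: eq_bigr => u _; rewrite mxE scalerA. Qed.
Lemma LambdaD v w : Lambda A (v + w) = Lambda A v + Lambda A w.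
Proof. by rewrite /Lambda -mxdiagD; apply: eq_mxdiag => i; apply: Lambda_iD. Qed.
Lemma LambdaZ k v : Lambda A (k *: v) = k *: Lambda A v.
Proof. by rewrite /Lambda -mxdiag_scale; apply: eq_mxdiag => i; apply: Lambda_iZ. Qed.
Lemma Lambda_iT i v : (Lambda_i A i v)^T = Lambda_i A i v.
Proof. by rewrite /Lambda_i linear_sum; apply: eq_bigr => u _; rewrite linearZ /= symA. Qed.
Lemma LambdaT v : (Lambda A v)^T = Lambda A v.
Proof. by rewrite /Lambda tr_mxdiag; apply: eq_mxdiag => i; apply: Lambda_iT. Qed.

Lemma qf_mxdiag (F : forall i, 'M[R]_(L i)) (V : 'cV[R]_(\sum_i L i)) :
  qf (mxdiag F) V = \sum_i qf (F i) (submxcol V i).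
Proof.
rewrite /qf /bf -[V]submxcolK tr_mxcol mul_mxrow_mxdiag mul_mxrow_mxcol summxE.
by apply: eq_bigr => i _; rewrite mxcolK.
Qed.

Definition emb i0 (a : 'cV[R]_(L i0)) : 'cV[R]_(\sum_i L i) :=
  \mxcol_i (if i == i0 then conform_mx 0 a else 0).

Lemma qf_emb (F : forall i, 'M[R]_(L i)) i0 a : qf (mxdiag F) (emb a) = qf (F i0) a.
Proof.
rewrite qf_mxdiag (bigD1 i0) //= big1 ?addr0.
  by rewrite /emb mxcolK eqxx conform_mx_id.
by move=> j ji; rewrite /emb mxcolK (negbTE ji) qf0.
Qed.

Lemma pdm_Lambda x : (forall i a, a != 0 -> 0 < qf (Lambda_i A i x) a) ->
  pdm (Lambda A x).
Proof.
move=> hpos; split; first exact: LambdaT.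
move=> V Vn0; rewrite /Lambda qf_mxdiag.
have nonneg : forall j b, 0 <= qf (Lambda_i A j x) b.
  by move=> j b; have [->|bn0] := eqVneq b 0; [rewrite qf0 | apply/ltW/hpos].
case: (pickP (fun i => submxcol V i != 0)) => [i Vi|all0].
  rewrite (bigD1 i) //=; apply: (lt_le_trans (hpos i _ Vi)).
  by rewrite lerDl; apply: sumr_ge0 => j _.
exfalso; move/eqP: Vn0; apply.
rewrite -[V]submxcolK -(mxcol0 (p_ := L) 1); apply: eq_mxcol => i.
by have /negbFE/eqP := all0 i.
Qed.

Lemma Hess_eq x : Hess A x = Hs (Lambda A) x.
Proof.
by apply/matrixP => u v; rewrite !mxE LambdaT !mulmxA.
Qed.

Lemma tvec_eq y : - grad A y = tv (Lambda A) y.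
Proof.
by rewrite /grad opprK; apply/matrixP => u j; rewrite !mxE LambdaT.
Qed.

End Conn.

Section Combo.
Variables (R : realType) (n k : nat) (f : 'I_k -> mpol R n).
Lemma combo0 : combo f 0 = 0.
Proof. by rewrite /combo big1 // => u _; rewrite mxE scale0r. Qed.
Lemma comboD c1 c2 : combo f (c1 + c2) = combo f c1 + combo f c2.
Proof. by rewrite /combo -big_split; apply: eq_bigr => u _; rewrite mxE scalerDl. Qed.
Lemma comboZ a c : combo f (a *: c) = a *: combo f c.
Proof. by rewrite /combo scaler_sumr; apply: eq_bigr => u _; rewrite mxE scalerA. Qed.
Lemma comboB c1 c2 : combo f (c1 - c2) = combo f c1 - combo f c2.
Proof. by rewrite comboD -scaleN1r comboZ scaleN1r. Qed.
Lemma combo_sum (N : nat) (c : 'I_N -> 'cV[R]_k) :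
  combo f (\sum_j c j) = \sum_j combo f (c j).
Proof. exact: (big_morph (combo f) comboD combo0). Qed.
End Combo.

Unset Implicit Arguments.
Section Poly.
Variables (R : realType) (n m : nat) (g : 'I_m -> mpol R n) (d : 'I_m -> nat).
Variables (U : nat) (q : 'I_U -> mpol R n) (L : 'I_m -> nat).
Variables (p : forall i : 'I_m, 'I_(L i) -> mpol R n).
Variables (A : forall i : 'I_m, 'I_U -> 'M[R]_(L i)).
Hypothesis gnz : forall i, g i != 0.
Hypothesis hq : is_basis_V g d q.
Hypothesis hp : forall i, is_basis_deg (d i) (p i).
Hypothesis hA : forall i j k, g i * p i j * p i k = \sum_(u < U) A i u j k *: q u.

Lemma q_inj c1 c2 : combo q c1 = combo q c2 -> c1 = c2.
Proof.
case: hq => _ hinj _ e; apply/eqP; rewrite -subr_eq0; apply/eqP/hinj.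
by rewrite comboB e subrr.
Qed.

Lemma symA i u : (A i u)^T = A i u.
Proof.
apply/matrixP => j k; rewrite mxE.
have := @q_inj (\col_u A i u k j) (\col_u A i u j k).
have e : forall a b, combo q (\col_u A i u a b) = g i * p i a * p i b.
  by move=> a b; rewrite hA /combo; apply: eq_bigr => v _; rewrite mxE.
rewrite !e mulrAC => /(_ erefl)/matrixP/(_ u 0).
by rewrite !mxE.
Qed.

Lemma deg_combo i a : deg_le (combo (p i) a) (d i).
Proof.
rewrite /deg_le /combo; apply: leq_trans (mpoly.msize_sum _ _ _) _.
apply/bigmax_leqP => j _; apply: leq_trans (mpoly.msizeZ_le _ _) _.
by case: (hp i) => hdeg _ _; exact: hdeg j.
Qed.

Definition cvec i (a : 'cV[R]_(L i)) : 'cV[R]_U := \col_u qf (A i u) a.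

Lemma qf_expand N (S : 'M[R]_N) a :
  qf S a = \sum_j \sum_k (a j 0 * a k 0 * S j k).
Proof.
rewrite /qf /bf mxE; under eq_bigr do rewrite mxE mulr_suml.
rewrite exchange_big; apply: eq_bigr => j _; apply: eq_bigr => k _.
by rewrite mxE; ring.
Qed.

Lemma combo_cvec i a : combo q (cvec i a) = g i * (combo (p i) a) ^+ 2.
Proof.
rewrite expr2 mulrA /combo mulr_sumr.
under [RHS]eq_bigr do rewrite mulr_sumr mulr_suml.
rewrite [RHS]exchange_big /=.
under [LHS]eq_bigr do rewrite mxE qf_expand scaler_suml.
rewrite exchange_big; apply: eq_bigr => j _.
under [LHS]eq_bigr do rewrite scaler_suml.
rewrite exchange_big; apply: eq_bigr => k _.
have -> : g i * (a j 0 *: p i j) * (a k 0 *: p i k) = (a j 0 * a k 0) *: (g i * p i j * p i k).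
  by rewrite -!scalerAr -scalerAl scalerA mulrC.
by rewrite hA scaler_sumr; apply: eq_bigr => u _; rewrite scalerA.
Qed.

Lemma qfm0 N (a : 'cV[R]_N) : qf (0 : 'M[R]_N) a = 0.
Proof. by rewrite /qf /bf mulmx0 mul0mx mxE. Qed.

Lemma cvec_w i a w : ((cvec i a)^T *m w) 0 0 = qf (Lambda_i A i w) a.
Proof.
rewrite /Lambda_i (big_morph (fun S => qf S a) (fun S T => qfD S T a) (qfm0 _ a)).
rewrite mxE; apply: eq_bigr => u _; rewrite qfZ !mxE mulrC.
by [].
Qed.

Lemma cvec_Sigma i a : Sigma_coord g d q (cvec i a).
Proof.
exists (fun j => if j == i then (combo (p i) a) ^+ 2 else 0); split.
  move=> j; case: eqP => [->|_].
    exists 1%N, (fun _ => combo (p i) a); split; last by rewrite big_ord1.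
    by move=> _; apply: deg_combo.
  by exists 0%N, (fun _ => 0); split; [case | rewrite big_ord0].
rewrite combo_cvec (bigD1 i) //= eqxx big1 ?addr0 //.
by move=> j /negbTE ->; rewrite mulr0.
Qed.

Lemma Sigma_decomp c : Sigma_coord g d q c -> forall w,
  ((forall i a, 0 <= qf (Lambda_i A i w) a) -> 0 <= (c^T *m w) 0 0) /\
  ((forall i a, qf (Lambda_i A i w) a = 0) -> (c^T *m w) 0 0 = 0).
Proof.
case=> sigma [hs hsum].
have step : forall i, exists ci : 'cV[R]_U, combo q ci = g i * sigma i /\
   forall w, ((forall a, 0 <= qf (Lambda_i A i w) a) -> 0 <= (ci^T *m w) 0 0) /\
             ((forall a, qf (Lambda_i A i w) a = 0) -> (ci^T *m w) 0 0 = 0).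
  move=> i; case: (hs i) => N [h [hdeg hsig]].
  have : forall j, exists a : 'cV[R]_(L i), h j = combo (p i) a.
    by move=> j; case: (hp i) => _ _ hspan; apply: hspan.
  move=> /boolp.choice [av hav].
  exists (\sum_j cvec i (av j)); split.
    rewrite combo_sum hsig mulr_sumr; apply: eq_bigr => j _.
    by rewrite combo_cvec hav.
  have ew : forall w, ((\sum_j cvec i (av j))^T *m w) 0 0 =
                      \sum_j qf (Lambda_i A i w) (av j).
    move=> w; rewrite linear_sum /= mulmx_suml summxE.
    by apply: eq_bigr => j _; rewrite cvec_w.
  move=> w; rewrite ew; split => H.
    by apply: sumr_ge0 => j _.
  by apply: big1 => j _.
have /boolp.choice [cs hcs] := step.
have ec : c = \sum_i cs i.
  apply: q_inj; rewrite combo_sum -hsum; apply: eq_bigr => i _.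
  by rewrite (hcs i).1.
move=> w; rewrite ec linear_sum /= mulmx_suml summxE; split => H.
  by apply: sumr_ge0 => i _; apply: ((hcs i).2 w).1.
by apply: big1 => i _; apply: ((hcs i).2 w).2.
Qed.

Lemma cc_pos (c : 'cV[R]_U) : c != 0 -> 0 < (c^T *m c) 0 0.
Proof.
move=> cn0; rewrite -tr11 lt_neqAle trGG_ge0 andbT.
apply: contra cn0 => /eqP h; apply/eqP/trGG_eq0; by rewrite -h.
Qed.

Lemma interior_pd x : interior (dual_cone (Sigma_coord g d q)) x ->
  forall i a, a != 0 -> 0 < qf (Lambda_i A i x) a.
Proof.
move=> hx i a an0.
have hxd := interior_subset hx.
have ge : 0 <= qf (Lambda_i A i x) a.
  by rewrite -cvec_w; apply: hxd; apply: cvec_Sigma.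
rewrite lt_neqAle ge andbT; apply/negP => /eqP h0.
have [c ec] : exists c, c = cvec i a by eexists.
have cn0 : c != 0.
  apply/negP => /eqP c0; move: an0 => /negP; apply.
  have := combo_cvec i a; rewrite -ec c0 combo0 => /esym/eqP.
  rewrite mulf_eq0 (negbTE (gnz i)) /= expf_eq0 /= => /eqP ha.
  by case: (hp i) => _ hinj _; rewrite (hinj a ha).
have cc := cc_pos c cn0.
move: hx => /nbhs_ballP [e e0 he].
have {}e0 : 0 < e := e0.
pose t := e / (2 * (`|c| + 1)).
have nc := normr_ge0 c.
have t0 : 0 < t by rewrite /t divr_gt0 // mulr_gt0 //; lra.
have ht : t * (`|c| + 1) = e / 2.
  rewrite /t; field; apply/negP => /eqP h; lra.
have hb : ball x e (x - t *: c).
  rewrite -ball_normE /= opprB addrC subrK normrZ gtr0_norm //.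
  have h1 : t * `|c| = e / 2 - t by rewrite -ht mulrDr mulr1 addrK.
  rewrite h1; lra.
have := he _ hb c; rewrite ec => /(_ (cvec_Sigma i a)).
rewrite -ec mulmxBr -scalemxAr mxBE mxZE.
have -> : (c^T *m x) 0 0 = 0 by rewrite ec cvec_w -h0.
have := mulr_gt0 t0 cc; lra.
Qed.

Lemma Lambda_inj : proper_cone (Sigma_coord g d q) -> forall w, Lambda A w = 0 -> w = 0.
Proof.
case=> _ _ [c0 hc0] w hw.
have zero : forall c, Sigma_coord g d q c -> (c^T *m w) 0 0 = 0.
  move=> c hc; apply: (Sigma_decomp c hc w).2 => i a.
  have e : qf (Lambda A w) (emb a) = qf (Lambda_i A i w) a :=
    qf_emb (fun j => Lambda_i A j w) a.
  by rewrite -e hw qfm0.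
clear hw.
have hc0' := interior_subset hc0.
move: hc0 => /nbhs_ballP [e e0 he].
have {}e0 : 0 < e := e0.
pose t := e / (2 * (`|w| + 1)).
have nw := normr_ge0 w.
have t0 : 0 < t by rewrite /t divr_gt0 // mulr_gt0 //; lra.
have ht : t * (`|w| + 1) = e / 2.
  rewrite /t; field; apply/negP => /eqP h; lra.
have hb : ball c0 e (c0 + t *: w).
  rewrite -ball_normE /= opprD addrA subrr add0r normrN normrZ gtr0_norm //.
  have h1 : t * `|w| = e / 2 - t by rewrite -ht mulrDr mulr1 addrK.
  rewrite h1; lra.
have := zero _ (he _ hb).
rewrite linearD /= linearZ /= mulmxDl -scalemxAl mxDE mxZE (zero _ hc0') add0r.
move=> /eqP; rewrite mulf_eq0 (gt_eqF t0) /= => /eqP h.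
apply/eqP; apply: contraT => wn0; have := cc_pos w wn0; rewrite h ltxx.
by [].
Qed.

End Poly.

Unset Implicit Arguments.
Set Strict Implicit.

Lemma sqrt_lt_half (R : realType) (s : R) : Num.sqrt s < 1 / 2 -> s < 1 / 4.
Proof.
move=> h; have [s0|s0] := ltP s 0; first lra.
have := sqr_sqrtr s0; have := sqrtr_ge0 s.
move: (Num.sqrt s) h => r h r0 e; rewrite -e; nra.
Qed.

Theorem corollary1 (R : realType) (n m : nat)
    (g : 'I_m -> mpol R n) (d : 'I_m -> nat)
    (U : nat) (q : 'I_U -> mpol R n)
    (L : 'I_m -> nat) (p : forall i : 'I_m, 'I_(L i) -> mpol R n)
    (A : forall i : 'I_m, 'I_U -> 'M[R]_(L i)) :
  (forall i, g i != 0) ->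
  is_basis_V g d q ->
  proper_cone (Sigma_coord g d q) ->
  (forall i, is_basis_deg (d i) (p i)) ->
  (* Lambda_i is the linear map with sum_u q_u Lambda_i(e_u) = g_i p_i p_i^T *)
  (forall i j k, g i * p i j * p i k = \sum_(u < U) A i u j k *: q u) ->
  forall x y : 'cV[R]_U,
    interior (dual_cone (Sigma_coord g d q)) x ->
    interior (dual_cone (Sigma_coord g d q)) y ->
    let t := - grad A y in
    local_norm A x (x - y) < 1 / 2 ->
    dual_cone (Sigma_coord g d q) (invmx (Hess A x) *m t).
Proof.
move=> gnz hq hprop hp hA x y hx hy t hloc.
have sA : forall i u, (A i u)^T = A i u.
  by move=> i u; apply: (symA _ _ _ _ _ _ _ _ _ _ hq hA).
have hXpd : pdm (Lambda A x).
  apply: (pdm_Lambda sA) => i a an0.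
  exact: (interior_pd _ _ _ _ _ _ _ _ _ _ gnz hp hA x hx).
have hYpd : pdm (Lambda A y).
  apply: (pdm_Lambda sA) => i a an0.
  exact: (interior_pd _ _ _ _ _ _ _ _ _ _ gnz hp hA y hy).
have inj : forall w, Lambda A w = 0 -> w = 0.
  exact: (Lambda_inj _ _ _ _ _ _ _ _ _ _ hq hp hA hprop).
have hd : qf (Hs (Lambda A) x) (x - y) < 1 / 4.
  apply: sqrt_lt_half; rewrite -(Hess_eq sA); exact: hloc.
have hcore := core (LambdaD A) (LambdaZ A) (LambdaT sA) inj
   hXpd hYpd hd.
move=> c hc.
apply: (Sigma_decomp _ _ _ _ _ _ _ _ _ _ hq hp hA c hc _).1 => i a.
set z := invmx (Hess A x) *m t.
have e := qf_emb (fun j => Lambda_i A j z) a.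
rewrite -e.
by rewrite /z /t (Hess_eq sA) (tvec_eq sA); apply: hcore.
Qed.
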